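(* There is a one-to-one correspondence between triples of lifted partial permutations of the form $(\tilde S,\tilde f)$, $(\tilde T,\tilde g)$, $(\tilde S,\tilde g\circ\tilde f)$ with $\tilde T=\tilde f(\tilde S)$, and triangularly connected triples of Heegaard states $\mathbf x\in\mathfrak S(\mathcal H_{\alpha\beta})$, $\mathbf y\in\mathfrak S(\mathcal H_{\beta\gamma})$, $\mathbf z\in\mathfrak S(\mathcal H_{\alpha\gamma})$ (where $\mathbf x,\mathbf y,\mathbf z$ correspond to $\tilde f$, $\tilde g$, $\tilde g\circ\tilde f$ respectively). Moreover, if $\psi\in D(\mathbf x,\mathbf y,\mathbf z)$ is the domain connecting them, then for each $i=1,\dots,m$, $$w_i(\tilde f)+w_i(\tilde g)=w_i(\tilde g\circ\tilde f)+n_{O_i}(\psi),$$ where $n_{O_i}(\psi)$ is the local multiplicity of $\psi$ at $O_i$.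
   Context: Fix $0<k<m$. $G_m$ is the group of isometries of $\mathbb R$ generated by $x\mapsto1-x$, $x\mapsto2m-1-x$; $Q_2(j-\frac12)$ is the unique $i\in\{1,\dots,m\}$ with $i\equiv j$ or $i\equiv 2-j\pmod{2m-2}$. A lifted partial permutation on $k$ letters is a pair $(\tilde S,\tilde f)$ with $\tilde S\subset\mathbb Z$ $G_m$-invariant, $|\tilde S/G_m|=k$, $\tilde f:\tilde S\to\mathbb Z$ $G_m$-equivariant with injective induced map $\tilde S/G_m\to\mathbb Z/G_m$; $w_j(\tilde f)=\tfrac12\#\{i\in\tilde S: i<j-\tfrac12<\tilde f(i)\text{ or } i>j-\tfrac12>\tilde f(i)\}$. Heegaard triple: in $\mathbb R^2$ with punctures $O_{Q_2(i+1/2)}$ at $(i+\frac12,i+\frac12)$ and $\mathbb G_m$ generated by the $180^\circ$ rotations about $(\frac12,\frac12)$ and $(m-\frac12,m-\frac12)$, take lines $\tilde\alpha_\ell=\{\ell\}\times\mathbb R$, $\tilde\gamma_\ell=\mathbb R\times\{\ell\}$, and a $\mathbb G_m$-invariant family of lines $\tilde\beta_\ell$ ($\ell\in\mathbb Z$) of slope $-1$, with $\tilde\beta_\ell$ crossing the diagonal between $(\ell-\frac12,\ell-\frac12)$ and $(\ell+\frac12,\ell+\frac12)$, and no triple intersection among an $\tilde\alpha$-line, a $\tilde\beta$-line and the diagonal. $\mathcal H=\mathbb R^2/\mathbb G_m$ with the image curves. A Heegaard state for $\mathcal H_{\alpha\beta}$ corresponds to $(\tilde S,\tilde f)$ via its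 lift $\bigcup_{s\in\tilde S}\tilde\alpha_s\cap\tilde\beta_{\tilde f(s)}$; similarly states of $\mathcal H_{\beta\gamma}$ via $\bigcup_t\tilde\beta_t\cap\tilde\gamma_{\tilde g(t)}$ and of $\mathcal H_{\alpha\gamma}$ via $\bigcup_s\tilde\alpha_s\cap\tilde\gamma_{\tilde h(s)}$. States $\mathbf x,\mathbf y,\mathbf z$ are triangularly connected if their $\mathbb G_m$-equivariant lifts $\tilde{\mathbf x},\tilde{\mathbf y},\tilde{\mathbf z}$ admit $k$ triangles in $\mathbb R^2$ with sides on $\tilde\alpha$, $\tilde\beta$, $\tilde\gamma$ lines in counterclockwise order, whose $\mathbb G_m$-orbits have corners exactly at $\tilde{\mathbf x},\tilde{\mathbf y},\tilde{\mathbf z}$; the quotient of these triangles is a two-chain $\psi\in D(\mathbf x,\mathbf y,\mathbf z)$ (two-chains with $\mathbf x$ as initial $\alpha\beta$ corners, $\mathbf y$ initial $\beta\gamma$ corners, $\mathbf z$ terminal $\alpha\gamma$ corners). *)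

(* Defs.v *)
From HB Require Import structures.
From mathcomp Require Import all_boot all_order all_algebra.
From mathcomp Require Import finmap all_classical all_reals.
Set Implicit Arguments.
Unset Strict Implicit.
Unset Printing Implicit Defensive.
Import Order.TTheory GRing.Theory Num.Theory.
Local Open Scope classical_set_scope.
Local Open Scope ring_scope.

(* G_m is generated by the two reflections sigma1 x = 1 - x and        *)
(* sigma2 x = 2m - 1 - x.  An element of the generated group is a      *)
(* finite composition of generators, encoded by a word (seq bool):     *)
(* false = sigma1, true = sigma2.  (Both generators are involutions,   *)
(* so these words give exactly the generated group.)                   *)

Definition Gword := seq bool.

Definition genZ (m : nat) (b : bool) (x : int) : int :=
  if b then (2 * m%:Z - 1) - x else 1 - x.

Definition actZ (m : nat) (w : Gword) (x : int) : int :=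
  foldr (genZ m) x w.

Definition genR (R : realType) (m : nat) (b : bool) (x : R) : R :=
  if b then (2 * m%:R - 1) - x else 1 - x.

Definition actR (R : realType) (m : nat) (w : Gword) (x : R) : R :=
  foldr (@genR R m) x w.

(* 𝔾_m : generated by the 180-degree rotations about (1/2,1/2) and
   (m-1/2,m-1/2), i.e. the diagonal action of G_m on R^2. *)
Definition actP (R : realType) (m : nat) (w : Gword) (p : R * R) : R * R :=
  (actR m w p.1, actR m w p.2).

Definition Gorb (m : nat) (a b : int) : Prop := exists w : Gword, b = actZ m w a.

(* f is a total function int -> int; only its values on S matter.      *)

Definition num_orbits (m : nat) (S : set int) (k : nat) : Prop :=
  exists r : seq int,
    [/\ size r = k,
        (forall a, a \in r -> S a),
        (forall i j, (i < size r)%N -> (j < size r)%N ->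
             Gorb m (nth 0 r i) (nth 0 r j) -> i = j)
      & (forall s, S s -> exists2 a, a \in r & Gorb m a s)].

Definition lifted_pperm (m k : nat) (S : set int) (f : int -> int) : Prop :=
  [/\
      (forall w s, S s -> S (actZ m w s)),
      num_orbits m S k,
      (forall w s, S s -> f (actZ m w s) = actZ m w (f s))
    &
      (forall a b, S a -> S b -> Gorb m (f a) (f b) -> Gorb m a b)].

Definition crossing_set (R : realType) (S : set int) (f : int -> int) (j : int)
  : set int :=
  [set i | S i /\
     (((i%:~R : R) < j%:~R - 2^-1 /\ j%:~R - 2^-1 < ((f i)%:~R : R)) \/
      ((i%:~R : R) > j%:~R - 2^-1 /\ j%:~R - 2^-1 > ((f i)%:~R : R)))].

Definition wt (R : realType) (S : set int) (f : int -> int) (j : int) : R :=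
  (#|` fset_set (crossing_set R S f j)|)%:R / 2.

Definition composable (m k : nat) (S : set int) (f : int -> int)
  (T : set int) (g : int -> int) : Prop :=
  [/\ lifted_pperm m k S f, lifted_pperm m k T g, T = f @` S
    & lifted_pperm m k S (g \o f)].

(* The Heegaard triple (in the universal cover R^2).                   *)

Definition alpha_line (R : realType) (s : int) (p : R * R) : Prop := p.1 = s%:~R.
Definition gamma_line (R : realType) (u : int) (p : R * R) : Prop := p.2 = u%:~R.
Definition beta_line (R : realType) (c : int -> R) (l : int) (p : R * R) : Prop :=
  p.1 + p.2 = c l.
Definition diagonal (R : realType) (p : R * R) : Prop := p.1 = p.2.

Definition beta_family (R : realType) (m : nat) (c : int -> R) : Prop :=
  [/\ (* slope -1 lines, beta_l crosses the diagonal strictly between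
         (l-1/2,l-1/2) and (l+1/2,l+1/2) *)
      (forall l : int, l%:~R - 2^-1 < c l / 2 < l%:~R + 2^-1),
      (forall (w : Gword) (l : int), exists l' : int,
         forall p, beta_line c l p -> beta_line c l' (actP m w p))
    &
      (forall (s l : int) (p : R * R),
         ~ (alpha_line s p /\ beta_line c l p /\ diagonal p))].

(* Lifts of Heegaard states, corresponding to (S,f) as in the paper. *)
Definition liftAB (R : realType) (c : int -> R) (S : set int) (f : int -> int)
  : set (R * R) :=
  [set p | exists s, S s /\ alpha_line s p /\ beta_line c (f s) p].
Definition liftBG (R : realType) (c : int -> R) (T : set int) (g : int -> int)
  : set (R * R) :=
  [set p | exists t, T t /\ beta_line c t p /\ gamma_line (g t) p].
Definition liftAG (R : realType) (S : set int) (h : int -> int) : set (R * R) :=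
  [set p | exists s, S s /\ alpha_line s p /\ gamma_line (h s) p].

Definition stateAB (R : realType) (m k : nat) (c : int -> R) (X : set (R * R)) :=
  exists S f, lifted_pperm m k S f /\ X = liftAB c S f.
Definition stateBG (R : realType) (m k : nat) (c : int -> R) (Y : set (R * R)) :=
  exists T g, lifted_pperm m k T g /\ Y = liftBG c T g.
Definition stateAG (R : realType) (m k : nat) (Z : set (R * R)) :=
  exists S h, lifted_pperm m k S h /\ Z = liftAG S h.

(* Triangles.  A triangle with sides on alpha_s, beta_t, gamma_u is    *)
(* encoded by (s,t,u); its corners are                                 *)
(*   X = alpha_s /\ beta_t, Y = beta_t /\ gamma_u, Z = alpha_s /\ gamma_u. *)

Definition tri := (int * int * int)%type.
Definition tri_s (T : tri) : int := T.1.1.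
Definition tri_t (T : tri) : int := T.1.2.
Definition tri_u (T : tri) : int := T.2.

Definition cornerX (R : realType) (c : int -> R) (T : tri) : R * R :=
  ((tri_s T)%:~R, c (tri_t T) - (tri_s T)%:~R).
Definition cornerY (R : realType) (c : int -> R) (T : tri) : R * R :=
  (c (tri_t T) - (tri_u T)%:~R, (tri_u T)%:~R).
Definition cornerZ (R : realType) (T : tri) : R * R :=
  ((tri_s T)%:~R, (tri_u T)%:~R).

(* signed area (twice) of the triangle p q r; > 0 iff counterclockwise *)
Definition orient (R : realType) (p q r : R * R) : R :=
  (q.1 - p.1) * (r.2 - p.2) - (q.2 - p.2) * (r.1 - p.1).

Definition good_tri (R : realType) (c : int -> R) (T : tri) : Prop :=
  orient (cornerX c T) (cornerY c T) (cornerZ R T) < 0.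

Definition tri_region (R : realType) (c : int -> R) (T : tri) : set (R * R) :=
  [set p | exists a b d : R, [/\ 0 <= a, 0 <= b, 0 <= d, a + b + d = 1 &
     p = (a * (cornerX c T).1 + b * (cornerY c T).1 + d * (cornerZ R T).1,
          a * (cornerX c T).2 + b * (cornerY c T).2 + d * (cornerZ R T).2)]].

Definition tri_witness (R : realType) (m k : nat) (c : int -> R)
  (X Y Z : set (R * R)) (tris : seq tri) : Prop :=
  [/\ size tris = k,
      (forall T, T \in tris -> good_tri c T),
      X = [set p | exists2 T, T \in tris & exists w, p = actP m w (cornerX c T)],
      Y = [set p | exists2 T, T \in tris & exists w, p = actP m w (cornerY c T)]
    & Z = [set p | exists2 T, T \in tris & exists w, p = actP m w (cornerZ R T)]].

Definition tri_connected (R : realType) (m k : nat) (c : int -> R)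
  (X Y Z : set (R * R)) : Prop :=
  exists tris, tri_witness m k c X Y Z tris.

(* Multiplicity at a point q of the two-chain psi in H = R^2/𝔾_m obtained as
   the quotient of the triangles tris: the number of lifts of q lying in the
   triangles, summed over the triangles. *)
Definition mult_at (R : realType) (m : nat) (c : int -> R) (tris : seq tri)
  (q : R * R) : nat :=
  \sum_(T <- tris)
     #|` fset_set [set q' | (exists w, q' = actP m w q) /\ tri_region c T q'] |.

(* Q_2(j - 1/2) = i *)
Definition Q2 (m : nat) (j : int) (i : int) : Prop :=
  [/\ 1 <= i, i <= m%:Z &
      ((i == j %[mod (2 * m%:Z - 2)])%Z \/ (i == 2 - j %[mod (2 * m%:Z - 2)])%Z)].

(* n_{O_i}(psi) = n : at every lift (j-1/2, j-1/2) of the puncture O_i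
   (i.e. Q_2(j-1/2) = i), the multiplicity of psi on a punctured
   neighbourhood of that lift is n. *)
Definition local_mult (R : realType) (m : nat) (c : int -> R) (tris : seq tri)
  (i : int) (n : nat) : Prop :=
  forall j : int, Q2 m j i ->
    let p : R * R := (j%:~R - 2^-1, j%:~R - 2^-1) in
    exists2 e : R, 0 < e & forall q : R * R, q <> p ->
      `|q.1 - p.1| < e -> `|q.2 - p.2| < e -> mult_at m c tris q = n.

Arguments liftAG R S h _ : clear implicits.
Arguments stateAG R m k Z : clear implicits.

(* Main.v *)
Require Import Defs.
From HB Require Import structures.
From mathcomp Require Import all_boot all_order all_algebra.
From mathcomp Require Import finmap all_classical all_reals.
From mathcomp Require Import zify ring lra.
Set Implicit Arguments.
Unset Strict Implicit.
Unset Printing Implicit Defensive.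
Import Order.TTheory GRing.Theory Num.Theory.
Local Open Scope classical_set_scope.
Local Open Scope ring_scope.

Definition LL (m : nat) : int := 2 * m%:Z - 2.
Definition eZ (m : nat) (b : bool) (n : int) (x : int) : int :=
  if b then 1 - x + n * LL m else x + n * LL m.
Definition eR (R : realType) (m : nat) (b : bool) (n : int) (x : R) : R :=
  if b then 1 - x + (n * LL m)%:~R else x + (n * LL m)%:~R.
Definition eR2 (R : realType) (m : nat) (b : bool) (n : int) (x : R) : R :=
  if b then 2 - x + (2 * (n * LL m))%:~R else x + (2 * (n * LL m))%:~R.

Lemma act_desc (R : realType) m (w : Gword) : exists b n,
  (forall x, actZ m w x = eZ m b n x) /\ (forall x : R, actR m w x = eR m b n x).
Proof.
elim: w => [|g w [b [n [HZ HR]]]].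
  by exists false, 0; split => x /=; rewrite /eZ /eR mul0r ?add0r addr0.
exists (~~ b), (- n + (if g then 1 else 0)); split => x /=;
  rewrite ?HZ ?HR /genZ /genR /eZ /eR; clear HZ HR.
  by case: g; case: b => /=; rewrite /LL; ring.
have hm : ((m%:Z)%:~R : R) = m%:R by [].
by case: g; case: b => /=; rewrite /LL ?(intrM, intrD, intrB, intrN) hm /=; ring.
Qed.

Definition realizes (R : realType) m (w : Gword) b n :=
  (forall x, actZ m w x = eZ m b n x) /\ (forall x : R, actR m w x = eR m b n x).

Lemma realize_TF (R : realType) m w b n : realizes R m w b n ->
  realizes R m [:: true, false & w] b (n + 1).
Proof.
move=> [HZ HR]; split => x /=; rewrite ?HZ ?HR /genZ /genR /eZ /eR; clear HZ HR.
  by case: b; rewrite /LL; ring.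
have hm : ((m%:Z)%:~R : R) = m%:R by [].
by case: b; rewrite /LL ?(intrM, intrD, intrB, intrN) hm /=; ring.
Qed.

Lemma realize_FT (R : realType) m w b n : realizes R m w b n ->
  realizes R m [:: false, true & w] b (n - 1).
Proof.
move=> [HZ HR]; split => x /=; rewrite ?HZ ?HR /genZ /genR /eZ /eR; clear HZ HR.
  by case: b; rewrite /LL; ring.
have hm : ((m%:Z)%:~R : R) = m%:R by [].
by case: b; rewrite /LL ?(intrM, intrD, intrB, intrN) hm /=; ring.
Qed.

Lemma realize_F (R : realType) m w n : realizes R m w false n ->
  realizes R m [:: false & w] true (- n).
Proof.
move=> [HZ HR]; split => x /=; rewrite ?HZ ?HR /genZ /genR /eZ /eR; clear HZ HR.
  by rewrite /LL; ring.
by rewrite /LL ?(intrM, intrD, intrB, intrN) /=; ring.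
Qed.

Lemma word_of (R : realType) m b n : exists w, realizes R m w b n.
Proof.
have H0 : forall n, exists w, realizes R m w false n.
  have Hnil : realizes R m [::] false 0.
    by split => x /=; rewrite /eZ /eR mul0r ?add0r addr0.
  case=> k.
    elim: k => [|k [w Hw]]; first by exists [::].
    by exists [:: true, false & w]; have := realize_TF Hw; rewrite -addn1 PoszD.
  elim: k => [|k [w Hw]].
    by exists [:: false; true]; have := realize_FT Hnil.
  exists [:: false, true & w]; have := realize_FT Hw.
  by rewrite !NegzE; congr realizes; lia.
case: b; last exact: H0.
have [w Hw] := H0 (- n); exists (false :: w); have := realize_F Hw.
by rewrite opprK.
Qed.

Lemma eR_int (R : realType) m b n (x : int) :
  eR m b n (x%:~R : R) = (eZ m b n x)%:~R.
Proof. by rewrite /eR /eZ; case: b; rewrite ?(intrD, intrB, intrN). Qed.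

Lemma Gorb_eZ (R : realType) m a b : Gorb m a b <-> exists bb n, b = eZ m bb n a.
Proof.
split.
  by move=> [w ->]; have [bb [n [HZ _]]] := act_desc R m w; exists bb, n.
move=> [bb [n ->]]; have [w [HZ _]] := word_of R m bb n.
by exists w; rewrite HZ.
Qed.

Lemma modP (L a b : int) : (a == b %[mod L])%Z -> exists n, a = b + n * L.
Proof.
rewrite eqz_mod_dvd => /dvdzP [q hq]; exists q; lia.
Qed.

Lemma modP' (L a b n : int) : a = b + n * L -> (a == b %[mod L])%Z.
Proof.
move=> ->; rewrite eqz_mod_dvd; apply/dvdzP; exists n; lia.
Qed.

Lemma modE (L a b : int) : (a == b %[mod L])%Z <-> exists n, a = b + n * L.
Proof. by split => [/modP|[n /modP']]. Qed.

Definition rho (m : nat) (x : int) : int :=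
  Order.min (x %% LL m)%Z ((1 - x) %% LL m)%Z.

Lemma rho_cases m x : rho m x = (x %% LL m)%Z \/ rho m x = ((1 - x) %% LL m)%Z.
Proof. by rewrite /rho /Order.min; case: ifP; [left|right]. Qed.

Lemma rhoP m x y : rho m x = rho m y <-> exists bb n, y = eZ m bb n x.
Proof.
split.
  move=> H.
  have hx := rho_cases m x; have hy := rho_cases m y.
  have K : forall a b : int, (a %% LL m)%Z = (b %% LL m)%Z ->
      exists n, a = b + n * LL m.
    by move=> a b E; apply: modP; apply/eqP.
  case: hx => Hx; case: hy => Hy; rewrite Hx Hy in H.
  - by have [n En] := K _ _ H; exists false, (- n); rewrite /eZ; lia.
  - by have [n En] := K _ _ H; exists true, n; rewrite /eZ; lia.
  - by have [n En] := K _ _ H; exists true, (- n); rewrite /eZ; lia.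
  - by have [n En] := K _ _ H; exists false, n; rewrite /eZ; lia.
move=> [bb [n ->]]; rewrite /rho /eZ.
have K : forall a b n, ((a + n * LL m) %% LL m)%Z = (b %% LL m)%Z ->
   True by [].
case: bb.
  have -> : ((1 - x + n * LL m) %% LL m)%Z = ((1 - x) %% LL m)%Z.
    by apply/eqP; apply: (@modP' _ _ _ n).
  have -> : ((1 - (1 - x + n * LL m)) %% LL m)%Z = (x %% LL m)%Z.
    by apply/eqP; apply: (@modP' _ _ _ (- n)); ring.
  by rewrite minC.
have -> : ((x + n * LL m) %% LL m)%Z = (x %% LL m)%Z.
  by apply/eqP; apply: (@modP' _ _ _ n).
have -> : ((1 - (x + n * LL m)) %% LL m)%Z = ((1 - x) %% LL m)%Z.
  by apply/eqP; apply: (@modP' _ _ _ (- n)); ring.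
by [].
Qed.

Section CFacts.
Variables (R : realType) (m : nat) (c : int -> R).
Hypothesis hc : beta_family m c.

Lemma c_lt l : (2 * l - 1)%:~R < c l /\ c l < (2 * l + 1)%:~R.
Proof.
case: hc => H _ _; have /andP[h1 h2] := H l.
rewrite !(intrD, intrB, intrM) /=; split; lra.
Qed.

Lemma int_uniq (y : R) l l' :
  (2 * l - 1)%:~R < y -> y < (2 * l + 1)%:~R ->
  (2 * l' - 1)%:~R < y -> y < (2 * l' + 1)%:~R -> l = l'.
Proof.
move=> h1 h2 h3 h4.
have : (2 * l - 1)%:~R < ((2 * l' + 1)%:~R : R) by apply: lt_trans h4.
have : (2 * l' - 1)%:~R < ((2 * l + 1)%:~R : R) by apply: lt_trans h2.
rewrite !ltr_int; lia.
Qed.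

Lemma c_inj l l' : c l = c l' -> l = l'.
Proof.
move=> E; have [h1 h2] := c_lt l; have [h3 h4] := c_lt l'.
by apply: (int_uniq h1 h2); rewrite E.
Qed.

Lemma c_ne_int l z : c l <> z%:~R.
Proof.
move=> E; have [h1 h2] := c_lt l; rewrite E !ltr_int in h1 h2.
have ez : z = 2 * l by lia.
case: hc => _ _ H; apply: (H l l (l%:~R, l%:~R)).
rewrite /alpha_line /beta_line /diagonal /=; split => //; split => //.
by rewrite E ez intrM /=; ring.
Qed.

Lemma eR2_lt b n (y : R) l : (2 * l - 1)%:~R < y -> y < (2 * l + 1)%:~R ->
  (2 * eZ m b n l - 1)%:~R < eR2 m b n y /\ eR2 m b n y < (2 * eZ m b n l + 1)%:~R.
Proof.
rewrite /eR2 /eZ; case: b; rewrite !(intrD, intrB, intrM, intrN) /=; move=> *; split; lra.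
Qed.

Lemma c_equiv b n l : c (eZ m b n l) = eR2 m b n (c l).
Proof.
have [w [_ HR]] := word_of R m b n.
case: hc => _ H _; have [l' Hl'] := H w l.
have := Hl' (0, c l); rewrite /beta_line /actP /= !HR add0r => /(_ erefl) E.
have E' : c l' = eR2 m b n (c l).
  by rewrite -E /eR /eR2; clear E HR Hl'; case: b; rewrite !(intrD, intrM) /=; ring.
have [h1 h2] := c_lt l; have [h3 h4] := eR2_lt b n h1 h2.
have [h5 h6] := c_lt l'; rewrite E' in h5 h6.
by rewrite (int_uniq h3 h4 h5 h6).
Qed.

End CFacts.

Lemma card_count (T : choiceType) (s : seq T) (P : pred T) :
  uniq s -> (forall x, P x -> x \in s) ->
  #|` fset_set [set x | P x]| = count P s.
Proof.
elim: s P => [|x s IH] P /=.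
  move=> _ HP; have -> : [set x | P x] = set0.
    by apply/seteqP; split => y //= /HP.
  by rewrite fset_set0 cardfs0.
move=> /andP[xs us] HP.
have fin : forall Q : pred T, (forall y, Q y -> y \in s) -> finite_set [set y | Q y].
  move=> Q HQ; apply: (@sub_finite_set _ _ [set` s]); last exact: finite_seq.
  by move=> y /= /HQ.
case Px: (P x).
  pose Q := fun y => P y && (y != x).
  have -> : [set y | P y] = x |` [set y | Q y].
    apply/seteqP; split => y /=.
      by case: (eqVneq y x) => [->|ne] Py; [left|right; rewrite /Q Py ne].
    by case => [->|/andP[]].
  have HQ : forall y, Q y -> y \in s.
    move=> y /andP[/HP]; rewrite inE => /orP[/eqP->|//]; by rewrite eqxx.
  rewrite fset_setU1; last exact: fin.
  rewrite cardfsU1 IH //.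
  have -> : x \notin fset_set [set y | Q y].
    by apply/negP; rewrite (in_fset_set (fin _ HQ)) in_setE /= /Q eqxx andbF.
  congr (_ + _)%N; apply: eq_in_count => y ys; rewrite /Q.
  by case: (eqVneq y x) => [e|]; [rewrite -e ys in xs | rewrite andbT].
rewrite add0n IH // => y Py; have := HP y Py; rewrite inE => /orP[/eqP e|//].
by rewrite -e Py in Px.
Qed.

Lemma count_identity (T : eqType) (P Q Rr Ss : pred T) (s : seq T) :
  (forall x, P x + Q x = Rr x + 2 * Ss x)%N ->
  (count P s + count Q s = count Rr s + 2 * count Ss s)%N.
Proof.
move=> H; elim: s => //= x s IH; have := H x; lia.
Qed.

Definition window (lo : int) (N : nat) : seq int :=
  [seq lo + 1 + i%:Z | i <- iota 0 N].

Lemma window_uniq lo N : uniq (window lo N).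
Proof.
rewrite /window map_inj_uniq ?iota_uniq // => i j; lia.
Qed.

Lemma mem_window (lo : int) (N : nat) (J : int) : lo < J -> J <= lo + N%:Z -> J \in window lo N.
Proof.
move=> h1 h2; apply/mapP; exists (absz (J - lo - 1)%R); last by lia.
rewrite mem_iota; lia.
Qed.

Definition cross (a b J : int) : bool := ((a < J) && (J <= b)) || ((b < J) && (J <= a)).
Definition sep (s t u J : int) : bool :=
  ((s < J) && (u < J) && (J <= t)) || ((t < J) && (J <= s) && (J <= u)).

Definition ccnt m (j : int) (P : int -> bool) : nat :=
  #|` fset_set [set J : int | (J == j %[mod LL m])%Z && P J]|.

Lemma finite_bounded (P : int -> bool) (lo hi : int) :
  (forall J, P J -> lo < J <= hi) -> finite_set [set J | P J].
Proof.
move=> H; apply: (@sub_finite_set _ _ [set` window lo (absz (hi - lo)%R)]); last exact: finite_seq.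
move=> J /= /H /andP[h1 h2]; apply: mem_window => //; lia.
Qed.

Lemma ccnt_identity m j s t u :
  (ccnt m j (cross s t) + ccnt m j (cross t u) =
   ccnt m j (cross s u) + 2 * ccnt m j (sep s t u))%N.
Proof.
pose lo := Order.min s (Order.min t u); pose hi := Order.max s (Order.max t u).
pose W := window lo (absz (hi - lo)%R).
have HW : forall J, lo < J <= hi -> J \in W.
  by move=> J /andP[h1 h2]; apply: mem_window => //; lia.
rewrite /ccnt !(@card_count _ W) ?window_uniq //; first last.
all: try (move=> J /andP[_]; rewrite /cross /sep => H; apply: HW; rewrite /lo /hi; lia).
apply: count_identity => J; rewrite /cross /sep.
by case: (J == j %[mod LL m])%Z => /=; lia.
Qed.

Lemma card_disjU (T : choiceType) (A B : set T) :
  finite_set A -> finite_set B -> A `&` B = set0 ->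
  #|` fset_set (A `|` B)| = (#|` fset_set A| + #|` fset_set B|)%N.
Proof.
move=> fA fB AB; rewrite fset_setU // cardfsU -fset_setI // AB fset_set0.
by rewrite cardfs0 subn0.
Qed.

Lemma card_img (T U : choiceType) (f : T -> U) (A : set T) :
  injective f -> finite_set A -> #|` fset_set (f @` A)| = #|` fset_set A|.
Proof.
by move=> fi fA; rewrite fset_set_image // card_imfset.
Qed.

Lemma card_union_img (T : choiceType) (A1 A2 : set int) (f1 f2 : int -> T) :
  finite_set A1 -> finite_set A2 -> injective f1 -> injective f2 ->
  (forall a1 a2, A1 a1 -> A2 a2 -> f1 a1 <> f2 a2) ->
  finite_set (f1 @` A1 `|` f2 @` A2) /\
  #|` fset_set (f1 @` A1 `|` f2 @` A2)| = (#|` fset_set A1| + #|` fset_set A2|)%N.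
Proof.
move=> fA1 fA2 i1 i2 D; split; first by rewrite finite_setU; split; apply: finite_image.
rewrite card_disjU ?card_img //; try exact: finite_image.
apply/seteqP; split => // z [[a1 h1 <-] [a2 h2 e]].
by have := D _ _ h1 h2; rewrite e.
Qed.

Definition orbZ m (x : int) : set int := [set y | exists b n, y = eZ m b n x].

Section Half.
Variable R : realType.

Lemma lt_half (a j : int) : ((a%:~R : R) < j%:~R - 2^-1) <-> (a < j).
Proof.
split => H.
  have : (a%:~R : R) < j%:~R by lra.
  by rewrite ltr_int.
have : (a%:~R : R) <= (j - 1)%:~R by rewrite ler_int; lia.
rewrite intrB /=; lra.
Qed.

Lemma half_lt (a j : int) : (j%:~R - 2^-1 < (a%:~R : R)) <-> (j <= a).
Proof.
split => H.
  rewrite leNgt; apply/negP => H'.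
  have : (a%:~R : R) <= (j - 1)%:~R by rewrite ler_int; lia.
  rewrite intrB /=; lra.
have : (j%:~R : R) <= a%:~R by rewrite ler_int.
lra.
Qed.

Lemma crossing_eq (S : set int) (f : int -> int) j :
  crossing_set R S f j = [set i | S i /\ cross i (f i) j].
Proof.
apply/seteqP; split => i /= [Si H]; split => //.
  rewrite /cross; case: H => [[/lt_half h1 /half_lt h2]|[/half_lt h1 /lt_half h2]].
    by rewrite h1 h2.
  by rewrite h1 h2 orbT.
rewrite /cross in H; case/orP: H => /andP[h1 h2].
  by left; split; [apply/lt_half|apply/half_lt].
by right; split; [apply/half_lt|apply/lt_half].
Qed.

End Half.

Lemma cross_shift a b J n : cross (a + n) (b + n) J = cross a b (J - n).
Proof. by rewrite /cross; apply/idP/idP; lia. Qed.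

Lemma cross_refl a b J n : cross (1 - a + n) (1 - b + n) J = cross a b (2 - J + n).
Proof. by rewrite /cross; apply/idP/idP; lia. Qed.

Section Piece.
Variables (R : realType) (m : nat) (S' : set int) (h : int -> int) (x : int) (j : int).
Hypothesis Sx : S' x.
Hypothesis Sinv : forall b n y, S' y -> S' (eZ m b n y).
Hypothesis heq : forall b n, h (eZ m b n x) = eZ m b n (h x).

Let A := [set i | S' i /\ cross i (h i) j].
Let P1 := [set J : int | (J == j %[mod LL m])%Z && cross x (h x) J].
Let P2 := [set J : int | (J == 2 - j %[mod LL m])%Z && cross x (h x) J].

Lemma piece_eq : A `&` orbZ m x =
  (fun J => x + (j - J)) @` P1 `|` (fun J => J + j - x - 1) @` P2.
Proof.
apply/seteqP; split => i.
  move=> [[Si Hc] [b [n ei]]]; rewrite ei heq in Hc.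
  case: b ei Hc => ei; rewrite /eZ => Hc.
    right; exists (2 - j + n * LL m); last by rewrite ei /eZ /=; ring.
    rewrite /P2 /= (cross_refl) in Hc.
    rewrite /=; apply/andP; split; last by [].
    by apply: (@modP' _ _ _ n).
  left; exists (j - n * LL m); last by rewrite ei /eZ /=; ring.
  rewrite /P1 /= cross_shift in Hc; rewrite /=; apply/andP; split => //.
  by apply: (@modP' _ _ _ (- n)); ring.
case => -[J /andP[HJ Hc] <-].
  have [n En] := modP HJ.
  have ei : x + (j - J) = eZ m false (- n) x by rewrite /eZ En; ring.
  split; last by exists false, (- n).
  rewrite ei; split; first exact: Sinv.
  by rewrite heq /eZ cross_shift; rewrite En in Hc; move: Hc; congr cross; ring.
have [n En] := modP HJ.
have ei : J + j - x - 1 = eZ m true n x by rewrite /eZ En; ring.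
split; last by exists true, n.
rewrite ei; split; first exact: Sinv.
by rewrite heq /eZ cross_refl; rewrite En in Hc; move: Hc; congr cross; ring.
Qed.

Hypothesis hm : (1 < m)%N.

Lemma P1_fin : finite_set P1.
Proof.
apply: (@finite_bounded _ (Order.min x (h x)) (Order.max x (h x))) => J /andP[_].
rewrite /cross; lia.
Qed.

Lemma P2_fin : finite_set P2.
Proof.
apply: (@finite_bounded _ (Order.min x (h x)) (Order.max x (h x))) => J /andP[_].
rewrite /cross; lia.
Qed.

Lemma piece_card : finite_set (A `&` orbZ m x) /\
  #|` fset_set (A `&` orbZ m x)| =
  (ccnt m j (cross x (h x)) + ccnt m (2 - j) (cross x (h x)))%N.
Proof.
rewrite piece_eq; apply: card_union_img; [exact: P1_fin|exact: P2_fin| | |].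
- by move=> a b /= E; lia.
- by move=> a b /= E; lia.
move=> a1 a2 /andP[h1 _] /andP[h2 _] E.
have [n1 E1] := modP h1; have [n2 E2] := modP h2.
have : (n1 + n2) * LL m = 2 * ((n1 + n2) * (m%:Z - 1)) by rewrite /LL; ring.
lia.
Qed.

End Piece.

Lemma orbZ_rho m x y : orbZ m x y <-> rho m x = rho m y.
Proof. by rewrite rhoP. Qed.

Lemma card_union_orbits m (l : seq int) (A : set int) :
  uniq (map (rho m) l) ->
  A `<=` (fun y => exists2 x, x \in l & orbZ m x y) ->
  (forall x, x \in l -> finite_set (A `&` orbZ m x)) ->
  finite_set A /\
  #|` fset_set A| = (\sum_(x <- l) #|` fset_set (A `&` orbZ m x)|)%N.
Proof.
elim: l A => [|x l IH] A /=.
  move=> _ HA _; have -> : A = set0.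
    by apply/seteqP; split => // y /HA [z].
  by rewrite fset_set0 cardfs0 big_nil.
move=> /andP[nx ul] HA Hfin.
pose A' := A `\` orbZ m x.
have disj : forall y z, y \in l -> orbZ m x z -> orbZ m y z -> False.
  move=> y z yl /orbZ_rho e1 /orbZ_rho e2; move: nx.
  by rewrite e1 -e2 (map_f (rho m) yl).
have EA' : forall y, y \in l -> A' `&` orbZ m y = A `&` orbZ m y.
  move=> y yl; apply/seteqP; split => z; first by case=> -[].
  move=> [Az oz]; split => //; split => // ox.
  exact: (disj y z yl ox oz).
have H1 : A' `<=` (fun y => exists2 x, x \in l & orbZ m x y).
    move=> z [Az nz]; have [y] := HA z Az; rewrite inE => /orP[/eqP ->|yl] oy.
      by [].
    by exists y.
have H2 : forall y, y \in l -> finite_set (A' `&` orbZ m y).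
  by move=> y yl; rewrite EA' //; apply: Hfin; rewrite inE yl orbT.
have [finA' cardA'] := IH A' ul H1 H2.
have fin1 : finite_set (A `&` orbZ m x) by apply: Hfin; rewrite inE eqxx.
have AE : A = (A `&` orbZ m x) `|` A'.
  apply/seteqP; split => z.
    by move=> Az; case: (pselect (orbZ m x z)) => oz; [left|right].
  by case=> -[].
split; first by rewrite AE finite_setU.
rewrite {1}AE card_disjU //; last first.
  by apply/seteqP; split => // z [[_ oz] [_ noz]].
rewrite big_cons cardA'; congr (_ + _)%N.
by apply: eq_big_seq => y yl; rewrite EA'.
Qed.

Section Region.
Variables (R : realType) (m : nat) (c : int -> R).

Lemma lt_int1 (a b : int) : a < b -> (a%:~R : R) + 1 <= b%:~R.
Proof.
move=> H; have : (a + 1)%:~R <= (b%:~R : R) by rewrite ler_int; lia.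
by rewrite intrD.
Qed.

Lemma le_int1 (a b : int) : a <= b -> (a%:~R : R) <= b%:~R.
Proof. by rewrite ler_int. Qed.

Lemma region_sep (Tr : tri) (e : R) (J : int) (q : R * R) :
  0 < e -> e <= 2^-1 -> 2 * e <= c (tri_t Tr) - (2 * (tri_t Tr)%:~R - 1) ->
  2 * e <= (2 * (tri_t Tr)%:~R + 1) - c (tri_t Tr) ->
  `|q.1 - (J%:~R - 2^-1)| < e -> `|q.2 - (J%:~R - 2^-1)| < e ->
  tri_region c Tr q <-> sep (tri_s Tr) (tri_t Tr) (tri_u Tr) J.
Proof.
case: Tr => [[s t] u]; rewrite /tri_region /cornerX /cornerY /cornerZ /tri_s /tri_t /tri_u /=.
case: q => q1 q2 /=.
move=> e0 eh e1 e2; rewrite !ltr_norml => /andP[h1 h2] /andP[h3 h4].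
set ct := c t in e1 e2 *; clearbody ct.
split.
- move=> [a [b [d [a0 b0 d0 sum E]]]]; case: E => E1 E2.
  have ed : d = 1 - a - b by lra.
  have Eq1 : q1 = s%:~R + b * (ct - s%:~R - u%:~R) by rewrite E1 ed; ring.
  have Eq2 : q2 = u%:~R + a * (ct - s%:~R - u%:~R) by rewrite E2 ed; ring.
  have Eq3 : q1 + q2 = ct - d * (ct - s%:~R - u%:~R) by rewrite E1 E2 ed; ring.
  clear E1 E2 ed sum.
  case: (ltrgtP 0 (ct - s%:~R - u%:~R)) => HD.
  + have g1 := mulr_ge0 b0 (ltW HD); have g2 := mulr_ge0 a0 (ltW HD).
    have g3 := mulr_ge0 d0 (ltW HD).
    move: g1 g2 g3 Eq1 Eq2 Eq3.
    move: (b * _) (a * _) (d * _) => bD aD dD g1 g2 g3 Eq1 Eq2 Eq3.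
    have sJ : s < J by rewrite -(ltr_int R); lra.
    have uJ : u < J by rewrite -(ltr_int R); lra.
    have Jt : J <= t.
      rewrite leNgt; apply/negP => tJ.
      have := lt_int1 tJ; lra.
    by rewrite /sep sJ uJ Jt.
  + have g1 := mulr_ge0_le0 b0 (ltW HD); have g2 := mulr_ge0_le0 a0 (ltW HD).
    have g3 := mulr_ge0_le0 d0 (ltW HD).
    move: g1 g2 g3 Eq1 Eq2 Eq3.
    move: (b * _) (a * _) (d * _) => bD aD dD g1 g2 g3 Eq1 Eq2 Eq3.
    have Js : J <= s.
      rewrite leNgt; apply/negP => sJ.
      have := lt_int1 sJ; lra.
    have Ju : J <= u.
      rewrite leNgt; apply/negP => uJ.
      have := lt_int1 uJ; lra.
    have tJ : t < J.
      rewrite ltNge; apply/negP => Jt.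
      have : (J%:~R : R) <= t%:~R by rewrite ler_int.
      lra.
    by rewrite /sep tJ Js Ju orbT.
  + have Es : q1 = s%:~R by rewrite Eq1 -HD mulr0 addr0.
    have sJ : s < J by rewrite -(ltr_int R); lra.
    have := lt_int1 sJ; lra.
- move=> /orP[/andP[/andP[sJ uJ] Jt] | /andP[/andP[tJ Js] Ju]].
  + have sJ' := lt_int1 sJ; have uJ' := lt_int1 uJ; have Jt' := le_int1 Jt.
    have HD : 0 < ct - s%:~R - u%:~R by lra.
    have Hab : (q2 - u%:~R) / (ct - s%:~R - u%:~R) +
               (q1 - s%:~R) / (ct - s%:~R - u%:~R) <= 1.
      by rewrite -mulrDl ler_pdivrMr // mul1r; lra.
    exists ((q2 - u%:~R) / (ct - s%:~R - u%:~R)),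
           ((q1 - s%:~R) / (ct - s%:~R - u%:~R)),
           (1 - (q2 - u%:~R) / (ct - s%:~R - u%:~R) -
                (q1 - s%:~R) / (ct - s%:~R - u%:~R)).
    split.
    * apply: divr_ge0; [lra | exact: ltW].
    * apply: divr_ge0; [lra | exact: ltW].
    * lra.
    * ring.
    * have HD' : ct - s%:~R - u%:~R != 0 by apply: lt0r_neq0.
      by congr pair; field.
  + have tJ' := lt_int1 tJ; have Ju' := le_int1 Ju; have Js' := le_int1 Js.
    have HD : ct - s%:~R - u%:~R < 0 by lra.
    have HI : (ct - s%:~R - u%:~R)^-1 < 0 by rewrite invr_lt0.
    have Hab : (q2 - u%:~R) / (ct - s%:~R - u%:~R) +
               (q1 - s%:~R) / (ct - s%:~R - u%:~R) <= 1.
      by rewrite -mulrDl ler_ndivrMr // mul1r; lra.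
    exists ((q2 - u%:~R) / (ct - s%:~R - u%:~R)),
           ((q1 - s%:~R) / (ct - s%:~R - u%:~R)),
           (1 - (q2 - u%:~R) / (ct - s%:~R - u%:~R) -
                (q1 - s%:~R) / (ct - s%:~R - u%:~R)).
    split.
    * apply: mulr_le0; [lra | exact: ltW].
    * apply: mulr_le0; [lra | exact: ltW].
    * lra.
    * ring.
    * have HD' : ct - s%:~R - u%:~R != 0 by apply: ltr0_neq0.
      by congr pair; field.
Qed.

End Region.

Lemma actP_orbit (R : realType) m (q q' : R * R) :
  (exists w, q' = actP m w q) <-> exists b n, q' = (eR m b n q.1, eR m b n q.2).
Proof.
split.
  move=> [w ->]; have [b [n [_ HR]]] := act_desc R m w.
  by exists b, n; rewrite /actP !HR.
move=> [b [n ->]]; have [w [_ HR]] := word_of R m b n.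
by exists w; rewrite /actP !HR.
Qed.

Section Mult.
Variables (R : realType) (m : nat) (c : int -> R).

Lemma mult_piece (Tr : tri) (e : R) (j : int) (q : R * R) :
  0 < e -> e <= 2^-1 -> 2 * e <= c (tri_t Tr) - (2 * (tri_t Tr)%:~R - 1) ->
  2 * e <= (2 * (tri_t Tr)%:~R + 1) - c (tri_t Tr) ->
  q <> (j%:~R - 2^-1, j%:~R - 2^-1) ->
  `|q.1 - (j%:~R - 2^-1)| < e -> `|q.2 - (j%:~R - 2^-1)| < e ->
  finite_set [set q' | (exists w, q' = actP m w q) /\ tri_region c Tr q'] /\
  #|` fset_set [set q' | (exists w, q' = actP m w q) /\ tri_region c Tr q']| =
  (ccnt m j (sep (tri_s Tr) (tri_t Tr) (tri_u Tr)) +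
   ccnt m (2 - j) (sep (tri_s Tr) (tri_t Tr) (tri_u Tr)))%N.
Proof.
move=> e0 eh E1 E2 qp H1 H2.
set sp := sep (tri_s Tr) (tri_t Tr) (tri_u Tr).
pose P1 := [set J : int | (J == j %[mod LL m])%Z && sp J].
pose P2 := [set J : int | (J == 2 - j %[mod LL m])%Z && sp J].
pose g1 := fun J : int => (q.1 + (J - j)%:~R, q.2 + (J - j)%:~R).
pose g2 := fun J : int => (1 - q.1 + (J - 2 + j)%:~R, 1 - q.2 + (J - 2 + j)%:~R).
have RS := fun J q' => @region_sep R c Tr e J q' e0 eh E1 E2.
have -> : [set q' | (exists w, q' = actP m w q) /\ tri_region c Tr q'] =
          g1 @` P1 `|` g2 @` P2.
  apply/seteqP; split => q'.
    move=> [/actP_orbit [b [n ->]] Hr].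
    case: b Hr => /= Hr.
      right; exists (2 - j + n * LL m); last first.
        by rewrite /g2 /eR; congr pair; rewrite ?(intrD, intrB, intrN, intrM); ring.
      rewrite /P2 /=; apply/andP; split; first by apply: (@modP' _ _ _ n).
      apply/(RS _ (eR m true n q.1, eR m true n q.2)) => //=.
        have -> : eR m true n q.1 - ((2 - j + n * LL m)%:~R - 2^-1) =
                  - (q.1 - (j%:~R - 2^-1)).
          by rewrite /eR ?(intrD, intrB, intrN, intrM) /=; field.
        by rewrite normrN.
      have -> : eR m true n q.2 - ((2 - j + n * LL m)%:~R - 2^-1) =
                - (q.2 - (j%:~R - 2^-1)).
        by rewrite /eR ?(intrD, intrB, intrN, intrM) /=; field.
      by rewrite normrN.
    left; exists (j + n * LL m); last first.
      by rewrite /g1 /eR; congr pair; rewrite ?(intrD, intrB, intrN, intrM); ring.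
    rewrite /P1 /=; apply/andP; split; first by apply: (@modP' _ _ _ n).
    apply/(RS _ (eR m false n q.1, eR m false n q.2)) => //=.
      have -> : eR m false n q.1 - ((j + n * LL m)%:~R - 2^-1) =
                q.1 - (j%:~R - 2^-1).
        by rewrite /eR ?(intrD, intrB, intrN, intrM) /=; field.
      by [].
    have -> : eR m false n q.2 - ((j + n * LL m)%:~R - 2^-1) =
              q.2 - (j%:~R - 2^-1).
      by rewrite /eR ?(intrD, intrB, intrN, intrM) /=; field.
    by [].
  case=> -[J /andP[HJ Hs] <-]; have [n En] := modP HJ.
    split.
      apply/actP_orbit; exists false, n; rewrite /g1 /eR En; congr pair;
        rewrite ?(intrD, intrB, intrN, intrM); ring.
    have B1 : `|(g1 J).1 - (J%:~R - 2^-1)| < e.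
      have -> : (g1 J).1 - (J%:~R - 2^-1) = q.1 - (j%:~R - 2^-1).
        by rewrite /g1 /= ?(intrD, intrB, intrN, intrM) /=; field.
      by [].
    have B2 : `|(g1 J).2 - (J%:~R - 2^-1)| < e.
      have -> : (g1 J).2 - (J%:~R - 2^-1) = q.2 - (j%:~R - 2^-1).
        by rewrite /g1 /= ?(intrD, intrB, intrN, intrM) /=; field.
      by [].
    exact: (proj2 (RS J (g1 J) B1 B2) Hs).
  split.
    apply/actP_orbit; exists true, n; rewrite /g2 /eR En; congr pair;
      rewrite ?(intrD, intrB, intrN, intrM); ring.
  have B1 : `|(g2 J).1 - (J%:~R - 2^-1)| < e.
    have -> : (g2 J).1 - (J%:~R - 2^-1) = - (q.1 - (j%:~R - 2^-1)).
      by rewrite /g2 /= ?(intrD, intrB, intrN, intrM) /=; field.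
    by rewrite normrN.
  have B2 : `|(g2 J).2 - (J%:~R - 2^-1)| < e.
    have -> : (g2 J).2 - (J%:~R - 2^-1) = - (q.2 - (j%:~R - 2^-1)).
      by rewrite /g2 /= ?(intrD, intrB, intrN, intrM) /=; field.
    by rewrite normrN.
  exact: (proj2 (RS J (g2 J) B1 B2) Hs).
have spb : forall J, sp J ->
    Order.min (tri_s Tr) (Order.min (tri_t Tr) (tri_u Tr)) < J <=
    Order.max (tri_s Tr) (Order.max (tri_t Tr) (tri_u Tr)).
  by move=> J; rewrite /sp /sep; lia.
apply: card_union_img.
- apply: (@finite_bounded _ (Order.min (tri_s Tr) (Order.min (tri_t Tr) (tri_u Tr)))
    (Order.max (tri_s Tr) (Order.max (tri_t Tr) (tri_u Tr)))).
  by move=> J /andP[_ /spb].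
- apply: (@finite_bounded _ (Order.min (tri_s Tr) (Order.min (tri_t Tr) (tri_u Tr)))
    (Order.max (tri_s Tr) (Order.max (tri_t Tr) (tri_u Tr)))).
  by move=> J /andP[_ /spb].
- move=> a b [] /(congr1 (fun x => x - q.1)); rewrite !(addrC q.1) !addrK.
  by move/intr_inj; lia.
- move=> a b [] /(congr1 (fun x => x - (1 - q.1))); rewrite !(addrC (1 - q.1)) !addrK.
  by move/intr_inj; lia.
move=> a1 a2 /andP[h1 _] /andP[h2 _] [F1 F2].
have [n1 En1] := modP h1; have [n2 En2] := modP h2.
pose N := (n2 - n1) * (m%:Z - 1) + 1 - j.
have HN : a2 - 2 + j - (a1 - j) = 2 * N - 2 + 2 * j.
  by rewrite /N En1 En2 /LL; ring.
have Eq1 : q.1 - (j%:~R - 2^-1) = N%:~R.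
  have : 2 * q.1 = 1 + ((a2 - 2 + j) - (a1 - j))%:~R by rewrite intrB; lra.
  rewrite HN ?(intrD, intrB, intrN, intrM) /= => F; lra.
have Eq2 : q.2 - (j%:~R - 2^-1) = N%:~R.
  have : 2 * q.2 = 1 + ((a2 - 2 + j) - (a1 - j))%:~R by rewrite intrB; lra.
  rewrite HN ?(intrD, intrB, intrN, intrM) /= => F; lra.
rewrite Eq1 ltr_norml in H1.
have N0 : N = 0.
  case/andP: H1 => h1' h2'.
  have : (-1)%:~R < (N%:~R : R) by rewrite intrN /=; lra.
  have : (N%:~R : R) < 1%:~R by rewrite /=; lra.
  rewrite !ltr_int; lia.
apply: qp; move: Eq1 Eq2; rewrite N0 /=; clear g1 g2 F1 F2 H1 H2.
by case: q => q1 q2 /= Eq1 Eq2; congr pair; lra.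
Qed.

End Mult.

Section PP.
Variables (R : realType) (m k : nat) (S : set int) (f : int -> int).
Hypothesis pf : lifted_pperm m k S f.

Lemma pp_inv b n y : S y -> S (eZ m b n y).
Proof.
case: pf => H _ _ _ Sy; have [w [HZ _]] := word_of R m b n.
by rewrite -HZ; apply: H.
Qed.

Lemma pp_eqv b n y : S y -> f (eZ m b n y) = eZ m b n (f y).
Proof.
case: pf => _ _ H _ Sy; have [w [HZ _]] := word_of R m b n.
by rewrite -!HZ; apply: H.
Qed.

Lemma pp_inj a b : S a -> S b -> rho m (f a) = rho m (f b) -> rho m a = rho m b.
Proof.
case: pf => _ _ _ H Sa Sb /rhoP /(Gorb_eZ R) /(H _ _ Sa Sb) /(Gorb_eZ R).
by move/rhoP.
Qed.

Lemma pp_reps : exists r : seq int, [/\ size r = k, (forall a, a \in r -> S a),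
  uniq (map (rho m) r) & forall s, S s -> exists2 a, a \in r & orbZ m a s].
Proof.
case: pf => _ [r [sr rS ri rc]] _ _; exists r; split => //.
  apply/(uniqP 0) => i j; rewrite !inE size_map => hi hj.
  rewrite !(nth_map 0) // => /rhoP /(Gorb_eZ R) H.
  exact: ri.
by move=> s /rc [a ar /(Gorb_eZ R)]; exists a.
Qed.

End PP.

Lemma pp_ext m k (S : set int) (f f' : int -> int) :
  lifted_pperm m k S f -> {in S, f =1 f'} -> lifted_pperm m k S f'.
Proof.
move=> [H1 H2 H3 H4] E.
have E' : forall s, S s -> f' s = f s by move=> s Ss; rewrite E // inE.
split => //.
  by move=> w s Ss; rewrite !E' //; [apply: H3|apply: H1].
by move=> a b Sa Sb; rewrite !E' //; apply: H4.
Qed.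

Lemma uniq_transfer (l : seq tri) (F G : tri -> int) :
  uniq (map G l) -> (forall a b, a \in l -> b \in l -> F a = F b -> G a = G b) ->
  uniq (map F l).
Proof.
elim: l => //= x l IH /andP[nx ul] H; apply/andP; split; last first.
  by apply: IH => // a b al bl; apply: H; rewrite inE ?al ?bl orbT.
apply/negP => /mapP[y yl e]; move: nx; rewrite (H x y) ?inE ?eqxx ?yl ?orbT //.
by rewrite (map_f G yl).
Qed.

Lemma eR_sub (R : realType) m b n (x y : R) :
  eR m b n (x - y) + eR m b n y = eR2 m b n x.
Proof. by rewrite /eR /eR2; case: b; rewrite ?(intrD, intrM) /=; ring. Qed.

Section Witness.
Variables (R : realType) (m k : nat) (c : int -> R).
Hypothesis hc : beta_family m c.
Variables (S : set int) (f : int -> int) (T : set int) (g : int -> int)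
  (S2 : set int) (h : int -> int) (tris : seq tri).
Hypothesis HW : tri_witness m k c (liftAB c S f) (liftBG c T g) (liftAG R S2 h) tris.

Lemma wit_corner Tr : Tr \in tris ->
  [/\ S (tri_s Tr), tri_t Tr = f (tri_s Tr), T (tri_t Tr),
      tri_u Tr = g (tri_t Tr) & S2 (tri_s Tr) /\ tri_u Tr = h (tri_s Tr)].
Proof.
case: HW => _ _ EX EY EZ Tri.
have wnil : forall p : R * R, p = actP m [::] p by case.
have hX : liftAB c S f (cornerX c Tr) by rewrite EX; exists Tr => //; exists [::]; apply: wnil.
have hY : liftBG c T g (cornerY c Tr) by rewrite EY; exists Tr => //; exists [::]; apply: wnil.
have hZ : liftAG R S2 h (cornerZ R Tr) by rewrite EZ; exists Tr => //; exists [::]; apply: wnil.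
case: hX => s [Ss [Ha Hb]]; case: hY => t [Tt [Hb' Hg]]; case: hZ => s' [Ss' [Ha' Hg']].
move: Ha Hb Hb' Hg Ha' Hg'.
rewrite /alpha_line /beta_line /gamma_line /cornerX /cornerY /cornerZ /= => Ha Hb Hb' Hg Ha' Hg'.
have es := intr_inj Ha; have es' := intr_inj Ha'.
have et : tri_t Tr = f s by apply: (c_inj hc); rewrite -Hb es; ring.
have et' : tri_t Tr = t by apply: (c_inj hc); rewrite -Hb'; ring.
have eu := intr_inj Hg; have eu' := intr_inj Hg'.
by rewrite es; split => //; rewrite -?es ?et' //; split => //; rewrite ?eu' -?es ?es'.
Qed.

Lemma wit_coverS x : S x -> exists2 Tr, Tr \in tris & orbZ m (tri_s Tr) x.
Proof.
case: HW => _ _ EX _ _ Sx.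
have : liftAB c S f ((x%:~R : R), c (f x) - x%:~R).
  by exists x; rewrite /alpha_line /beta_line /=; split => //; split => //; ring.
rewrite EX => -[Tr Tri [w]]; have [b [n [_ HR]]] := act_desc R m w.
rewrite /actP /cornerX !HR => -[E _]; exists Tr => //; exists b, n.
by apply: (@intr_inj R); rewrite E eR_int.
Qed.

Lemma wit_coverT y : T y -> exists2 Tr, Tr \in tris & orbZ m (tri_t Tr) y.
Proof.
case: HW => _ _ _ EY _ Ty.
have : liftBG c T g (c y - (g y)%:~R, (g y)%:~R).
  by exists y; rewrite /beta_line /gamma_line /=; split => //; split => //; ring.
rewrite EY => -[Tr Tri [w]]; have [b [n [_ HR]]] := act_desc R m w.
rewrite /actP /cornerY !HR => -[E1 E2]; exists Tr => //; exists b, n.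
apply: (c_inj hc); rewrite (c_equiv hc) -(eR_sub _ _ _ _ ((tri_u Tr)%:~R)) -E1 -E2; ring.
Qed.

Lemma wit_coverS2 x : S2 x -> exists2 Tr, Tr \in tris & orbZ m (tri_s Tr) x.
Proof.
case: HW => _ _ _ _ EZ Sx.
have : liftAG R S2 h ((x%:~R : R), (h x)%:~R).
  by exists x; rewrite /alpha_line /gamma_line /=.
rewrite EZ => -[Tr Tri [w]]; have [b [n [_ HR]]] := act_desc R m w.
rewrite /actP /cornerZ !HR => -[E _]; exists Tr => //; exists b, n.
by apply: (@intr_inj R); rewrite E eR_int.
Qed.

End Witness.

Lemma wt_card (R : realType) m (S' : set int) (h : int -> int) (l : seq int) j :
  (1 < m)%N ->
  uniq (map (rho m) l) -> (forall x, x \in l -> S' x) ->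
  (forall y, S' y -> exists2 x, x \in l & orbZ m x y) ->
  (forall b n y, S' y -> S' (eZ m b n y)) ->
  (forall b n y, S' y -> h (eZ m b n y) = eZ m b n (h y)) ->
  #|` fset_set (crossing_set R S' h j)| =
  (\sum_(x <- l) (ccnt m j (cross x (h x)) + ccnt m (2 - j) (cross x (h x))))%N.
Proof.
move=> hm ul lS cov inv eqv; rewrite crossing_eq.
have [_ ->] := @card_union_orbits m l [set i | S' i /\ cross i (h i) j] ul
  (fun y Hy => cov y Hy.1)
  (fun x xl => (@piece_card m S' h x j (lS x xl) inv (fun b n => eqv b n x (lS x xl)) hm).1).
apply: eq_big_seq => x xl.
exact: (@piece_card m S' h x j (lS x xl) inv (fun b n => eqv b n x (lS x xl)) hm).2.
Qed.

Lemma exists_e (R : realType) m (c : int -> R) (l : seq tri) :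
  beta_family m c ->
  exists2 e : R, 0 < e & e <= 2^-1 /\ forall Tr, Tr \in l ->
    2 * e <= c (tri_t Tr) - (2 * (tri_t Tr)%:~R - 1) /\
    2 * e <= (2 * (tri_t Tr)%:~R + 1) - c (tri_t Tr).
Proof.
move=> hc; elim: l => [|Tr l [e e0 [eh He]]].
  by exists 2^-1; [lra | split; [lra | move=> Tr; rewrite in_nil]].
have [h1 h2] := c_lt hc (tri_t Tr).
rewrite ?(intrD, intrB, intrM) /= in h1 h2.
pose e' := Order.min e (Order.min ((c (tri_t Tr) - (2 * (tri_t Tr)%:~R - 1)) / 2)
                                  (((2 * (tri_t Tr)%:~R + 1) - c (tri_t Tr)) / 2)).
have le1 : e' <= e by rewrite /e' ge_min lexx.
have le2 : e' <= (c (tri_t Tr) - (2 * (tri_t Tr)%:~R - 1)) / 2.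
  by rewrite /e' !ge_min lexx orbT.
have le3 : e' <= ((2 * (tri_t Tr)%:~R + 1) - c (tri_t Tr)) / 2.
  by rewrite /e' !ge_min lexx !orbT.
exists e'.
  rewrite /e' !lt_min e0 /=; apply/andP; split; lra.
split; first lra.
move=> Tr'; rewrite inE => /orP[/eqP ->|Tl]; first by split; lra.
by have [k1 k2] := He Tr' Tl; split; lra.
Qed.

Lemma ccnt_mod m a b P : (a == b %[mod LL m])%Z -> ccnt m a P = ccnt m b P.
Proof.
move=> /eqP E; rewrite /ccnt; congr (#|` fset_set _|).
by apply/seteqP; split => J /=; rewrite E.
Qed.

Lemma Q2_ccnt m i j P : Q2 m j i ->
  (ccnt m j P + ccnt m (2 - j) P = ccnt m i P + ccnt m (2 - i) P)%N.
Proof.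
case=> _ _ [] /modP [n En].
  rewrite (@ccnt_mod m j i); last by apply: (@modP' _ _ _ (- n)); rewrite En /LL; ring.
  rewrite (@ccnt_mod m (2 - j) (2 - i)) //; apply: (@modP' _ _ _ n); rewrite En /LL; ring.
rewrite addnC (@ccnt_mod m j (2 - i)); last by apply: (@modP' _ _ _ n); rewrite En /LL; ring.
rewrite (@ccnt_mod m (2 - j) i) //; apply: (@modP' _ _ _ (- n)); rewrite En /LL; ring.
Qed.

Lemma claim4 (R : realType) (m k : nat) (c : int -> R) :
  (0 < k)%N -> (k < m)%N -> beta_family m c ->
  forall S f T g tris, composable m k S f T g ->
  tri_witness m k c (liftAB c S f) (liftBG c T g) (liftAG R S (g \o f)) tris ->
  forall i : int, 1 <= i <= m%:Z ->
  exists n : nat, local_mult m c tris i n /\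
    wt R S f i + wt R T g i = wt R S (g \o f) i + n%:R.
Proof.
move=> k0 km hc S f T g tris [pf pg ET pgf] HW i _.
have hm : (1 < m)%N by apply: leq_ltn_trans km.
have WC := wit_corner hc HW.
have uS : uniq (map (rho m) (map tri_s tris)).
  have [r [sr rS ur rc]] := pp_reps R pf.
  apply: (leq_size_uniq ur).
    move=> z /mapP [a ar ->]; have [Tr Tri [b [n E]]] := wit_coverS HW (rS a ar).
    apply/mapP; exists (tri_s Tr); first by apply: map_f.
    by apply: esym; apply/rhoP; exists b, n.
  by case: HW => Hs *; rewrite !size_map sr Hs.
have uT : uniq (map (rho m) (map tri_t tris)).
  rewrite -map_comp; apply: (uniq_transfer (G := rho m \o tri_s)); first by rewrite map_comp.
  move=> a b al bl /=; have [Sa ta _ _ _] := WC a al; have [Sb tb _ _ _] := WC b bl.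
  by rewrite ta tb; apply: (pp_inj R pf).
have covS : forall y, S y -> exists2 x, x \in map tri_s tris & orbZ m x y.
  by move=> y /(wit_coverS HW) [Tr Tri o]; exists (tri_s Tr) => //; apply: map_f.
have covT : forall y, T y -> exists2 x, x \in map tri_t tris & orbZ m x y.
  by move=> y /(wit_coverT hc HW) [Tr Tri o]; exists (tri_t Tr) => //; apply: map_f.
have lS : forall x, x \in map tri_s tris -> S x.
  by move=> x /mapP [Tr Tri ->]; have [] := WC Tr Tri.
have lT : forall x, x \in map tri_t tris -> T x.
  by move=> x /mapP [Tr Tri ->]; have [] := WC Tr Tri.
have Cf := @wt_card R m S f (map tri_s tris) i hm uS lS covS
  (pp_inv R pf) (pp_eqv R pf).
have Cg := @wt_card R m T g (map tri_t tris) i hm uT lT covT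
  (pp_inv R pg) (pp_eqv R pg).
have Cgf := @wt_card R m S (g \o f) (map tri_s tris) i hm uS lS covS
  (pp_inv R pf) (pp_eqv R pgf).
rewrite !big_map in Cf Cg Cgf.
pose n := (\sum_(Tr <- tris) (ccnt m i (sep (tri_s Tr) (tri_t Tr) (tri_u Tr)) +
          ccnt m (2 - i) (sep (tri_s Tr) (tri_t Tr) (tri_u Tr))))%N.
exists n; split.
  move=> j Hj /=.
  have [e e0 [eh He]] := exists_e tris hc.
  exists e => // q qp H1 H2.
  rewrite /mult_at /n; apply: eq_big_seq => Tr Tri.
  have [k1 k2] := He Tr Tri.
  rewrite (mult_piece m e0 eh k1 k2 qp H1 H2).2.
  exact: Q2_ccnt.
have Nid : (#|` fset_set (crossing_set R S f i)| + #|` fset_set (crossing_set R T g i)| =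
   #|` fset_set (crossing_set R S (g \o f) i)| + 2 * n)%N.
  rewrite Cf Cg Cgf /n -big_split /= big_distrr /= -big_split /=.
  apply: eq_big_seq => Tr Tri; have [_ et _ eu _] := WC Tr Tri.
  rewrite /= -et -eu.
  have := ccnt_identity m i (tri_s Tr) (tri_t Tr) (tri_u Tr).
  have := ccnt_identity m (2 - i) (tri_s Tr) (tri_t Tr) (tri_u Tr).
  lia.
rewrite /wt; have := congr1 (fun x : nat => (x%:R : R)) Nid.
rewrite /= !natrD => E; lra.
Qed.

Lemma liftAG_ext (R : realType) (S : set int) (h h' : int -> int) :
  {in S, h =1 h'} -> liftAG R S h = liftAG R S h'.
Proof.
move=> E; apply/seteqP; split => p [s [Ss [Ha Hg]]]; exists s; split => //;
  split => //; by rewrite /gamma_line Hg ?E // inE.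
Qed.

Section Claims.
Variables (R : realType) (m k : nat) (c : int -> R).
Hypothesis hc : beta_family m c.

Lemma good_all Tr : good_tri c Tr.
Proof.
rewrite /good_tri.
have -> : orient (cornerX c Tr) (cornerY c Tr) (cornerZ R Tr) =
  - ((c (tri_t Tr) - (tri_s Tr + tri_u Tr)%:~R) * (c (tri_t Tr) - (tri_s Tr + tri_u Tr)%:~R)).
  by rewrite /orient /cornerX /cornerY /cornerZ /= intrD; ring.
rewrite oppr_lt0.
have hD : c (tri_t Tr) - (tri_s Tr + tri_u Tr)%:~R != 0.
  by rewrite subr_eq0; apply/eqP; apply: (c_ne_int hc).
case: (ltrgtP (c (tri_t Tr) - (tri_s Tr + tri_u Tr)%:~R) 0) => H.
- by rewrite -mulrNN; apply: mulr_gt0; rewrite oppr_gt0.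
- by apply: mulr_gt0.
- by rewrite H eqxx in hD.
Qed.

Lemma claim1 S f T g S' f' T' g' :
  composable m k S f T g -> composable m k S' f' T' g' ->
  liftAB c S f = liftAB c S' f' -> liftBG c T g = liftBG c T' g' ->
  [/\ S = S', T = T', {in S, f =1 f'} & {in T, g =1 g'}].
Proof.
move=> _ _ EAB EBG.
have AB : forall (S1 S2 : set int) f1 f2, liftAB c S1 f1 = liftAB c S2 f2 ->
    forall x, S1 x -> S2 x /\ f1 x = f2 x.
  move=> S1 S2 f1 f2 E x Sx.
  have : liftAB c S1 f1 ((x%:~R : R), c (f1 x) - x%:~R).
    by exists x; rewrite /alpha_line /beta_line /=; split => //; split => //; ring.
  rewrite E => -[s [Ss [Ha Hb]]]; move: Ha Hb; rewrite /alpha_line /beta_line /=.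
  move=> /(@intr_inj R) es Hb; subst s; split => //.
  by apply: (c_inj hc); rewrite -Hb; ring.
have BG : forall (T1 T2 : set int) g1 g2, liftBG c T1 g1 = liftBG c T2 g2 ->
    forall y, T1 y -> T2 y /\ g1 y = g2 y.
  move=> T1 T2 g1 g2 E y Ty.
  have : liftBG c T1 g1 (c y - (g1 y)%:~R, (g1 y)%:~R).
    by exists y; rewrite /beta_line /gamma_line /=; split => //; split => //; ring.
  rewrite E => -[t [Tt [Hb Hg]]]; move: Hb Hg; rewrite /beta_line /gamma_line /=.
  move=> Hb /(@intr_inj R) Hg.
  have et : y = t by apply: (c_inj hc); rewrite -Hb; ring.
  by subst t.
split.
- by apply/seteqP; split => x Sx; [case: (AB _ _ _ _ EAB x Sx) | case: (AB _ _ _ _ (esym EAB) x Sx)].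
- by apply/seteqP; split => x Sx; [case: (BG _ _ _ _ EBG x Sx) | case: (BG _ _ _ _ (esym EBG) x Sx)].
- by move=> x; rewrite inE => /(AB _ _ _ _ EAB) [].
- by move=> x; rewrite inE => /(BG _ _ _ _ EBG) [].
Qed.

Lemma claim2 S f T g : composable m k S f T g ->
  tri_connected m k c (liftAB c S f) (liftBG c T g) (liftAG R S (g \o f)).
Proof.
move=> [pf pg ET pgf].
have [r [sr rS ur rc]] := pp_reps R pf.
have fT : forall x, S x -> T (f x) by move=> x Sx; rewrite ET; exists x.
exists (map (fun x => (x, f x, g (f x))) r); split.
- by rewrite size_map.
- by move=> Tr _; apply: good_all.
- apply/seteqP; split => p.
    move=> [s [Ss [Ha Hb]]]; have [a ar [b [n es]]] := rc s Ss.
    exists (a, f a, g (f a)); first by apply: (map_f (fun x => (x, f x, g (f x)))).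
    have [w [_ HR]] := word_of R m b n; exists w.
    rewrite /actP /cornerX /tri_s /tri_t /= !HR; case: p Ha Hb => p1 p2.
    rewrite /alpha_line /beta_line /= => -> Hb; congr pair.
      by rewrite eR_int es.
    have -> : p2 = c (f s) - s%:~R by rewrite -Hb; ring.
    rewrite es (pp_eqv R pf b n (rS a ar)) (c_equiv hc) -(eR_sub _ _ _ _ (a%:~R)).
    by rewrite eR_int; ring.
  move=> [Tr /mapP [a ar ->] [w ->]]; have [b [n [_ HR]]] := act_desc R m w.
  exists (eZ m b n a); split; first by apply: (pp_inv R pf); apply: rS.
  rewrite /alpha_line /beta_line /actP /cornerX /tri_s /tri_t /= !HR eR_int; split => //.
  rewrite (pp_eqv R pf b n (rS a ar)) (c_equiv hc) -(eR_sub _ _ _ _ (a%:~R)) eR_int.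
  by rewrite addrC.
- apply/seteqP; split => p.
    move=> [t [Tt [Hb Hg]]]; rewrite ET in Tt; case: Tt => s Ss et; subst t.
    have [a ar [b [n es]]] := rc s Ss.
    exists (a, f a, g (f a)); first by apply: (map_f (fun x => (x, f x, g (f x)))).
    have [w [_ HR]] := word_of R m b n; exists w.
    rewrite /actP /cornerY /tri_u /tri_t /= !HR; case: p Hb Hg => p1 p2.
    rewrite /beta_line /gamma_line /= => Hb Hg.
    have eg : g (f s) = eZ m b n (g (f a)).
      by rewrite es (pp_eqv R pf b n (rS a ar)) (pp_eqv R pg b n (fT a (rS a ar))).
    congr pair; last by rewrite Hg eg eR_int.
    have -> : p1 = c (f s) - p2 by rewrite -Hb; ring.
    rewrite Hg eg es (pp_eqv R pf b n (rS a ar)) (c_equiv hc).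
    by rewrite -(eR_sub _ _ _ _ ((g (f a))%:~R)) eR_int; ring.
  move=> [Tr /mapP [a ar ->] [w ->]]; have [b [n [_ HR]]] := act_desc R m w.
  have Ta := fT a (rS a ar).
  exists (eZ m b n (f a)); split; first by apply: (pp_inv R pg).
  rewrite /gamma_line /beta_line /actP /cornerY /tri_u /tri_t /= !HR; split.
    by rewrite eR_sub (c_equiv hc).
  by rewrite eR_int (pp_eqv R pg b n Ta).
- apply/seteqP; split => p.
    move=> [s [Ss [Ha Hg]]]; have [a ar [b [n es]]] := rc s Ss.
    exists (a, f a, g (f a)); first by apply: (map_f (fun x => (x, f x, g (f x)))).
    have [w [_ HR]] := word_of R m b n; exists w.
    rewrite /actP /cornerZ /tri_s /tri_u /= !HR; case: p Ha Hg => p1 p2.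
    rewrite /alpha_line /gamma_line /= => -> ->; congr pair; rewrite eR_int es //.
    by have /= -> := pp_eqv R pgf b n (rS a ar).
  move=> [Tr /mapP [a ar ->] [w ->]]; have [b [n [_ HR]]] := act_desc R m w.
  exists (eZ m b n a); split; first by apply: (pp_inv R pf); apply: rS.
  rewrite /alpha_line /gamma_line /actP /cornerZ /tri_s /tri_u /= !HR !eR_int; split => //.
  by have /= -> := pp_eqv R pgf b n (rS a ar).
Qed.

Lemma claim3 X Y Z : stateAB m k c X -> stateBG m k c Y -> stateAG R m k Z ->
  tri_connected m k c X Y Z ->
  exists S f T g, [/\ composable m k S f T g,
    X = liftAB c S f, Y = liftBG c T g & Z = liftAG R S (g \o f)].
Proof.
move=> [S1 [f1 [pf ->]]] [T1 [g1 [pg ->]]] [S2 [h [ph ->]]] [tris HW].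
have WC := wit_corner hc HW.
have E12 : S1 = S2.
  apply/seteqP; split => x Sx.
    have [Tr Tri [b [n ->]]] := wit_coverS HW Sx.
    by apply: (pp_inv R ph); have [_ _ _ _ []] := WC Tr Tri.
  have [Tr Tri [b [n ->]]] := wit_coverS2 HW Sx.
  by apply: (pp_inv R pf); have [] := WC Tr Tri.
have Eh : {in S1, h =1 g1 \o f1}.
  move=> x; rewrite inE => Sx; have [Tr Tri [b [n ->]]] := wit_coverS HW Sx.
  have [Ss et Tt eu [Ss2 eu2]] := WC Tr Tri.
  by rewrite /= (pp_eqv R ph b n Ss2) -eu2 eu (pp_eqv R pf b n Ss) -et (pp_eqv R pg b n Tt).
exists S1, f1, T1, g1; split => //; last by rewrite -E12; apply: liftAG_ext.
split => //; last by apply: (pp_ext _ Eh); rewrite E12.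
apply/seteqP; split => y.
  move=> Ty; have [Tr Tri [b [n ->]]] := wit_coverT hc HW Ty.
  have [Ss et _ _ _] := WC Tr Tri.
  by exists (eZ m b n (tri_s Tr)); [apply: (pp_inv R pf) | rewrite (pp_eqv R pf b n Ss) -et].
move=> [x Sx <-]; have [Tr Tri [b [n ->]]] := wit_coverS HW Sx.
have [Ss et Tt _ _] := WC Tr Tri.
by rewrite (pp_eqv R pf b n Ss) -et; apply: (pp_inv R pg).
Qed.

End Claims.

Theorem mainTheorem8 (R : realType) (m k : nat) (c : int -> R) :
  (0 < k)%N -> (k < m)%N -> beta_family m c ->
  [/\ (* the correspondence (f, g, g o f) |-> (x, y, z) is one-to-one *)
      (forall S f T g S' f' T' g',
         composable m k S f T g -> composable m k S' f' T' g' ->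
         liftAB c S f = liftAB c S' f' ->
         liftBG c T g = liftBG c T' g' ->
         liftAG R S (g \o f) = liftAG R S' (g' \o f') ->
         [/\ S = S', T = T', {in S, f =1 f'} & {in T, g =1 g'}]),
      (* it maps composable triples to triangularly connected triples *)
      (forall S f T g, composable m k S f T g ->
         tri_connected m k c (liftAB c S f) (liftBG c T g) (liftAG R S (g \o f))),
      (* and every triangularly connected triple of states arises this way *)
      (forall X Y Z, stateAB m k c X -> stateBG m k c Y -> stateAG R m k Z ->
         tri_connected m k c X Y Z ->
         exists S f T g, [/\ composable m k S f T g,
           X = liftAB c S f, Y = liftBG c T g & Z = liftAG R S (g \o f)])
    & (* the multiplicity formula *)
      (forall S f T g tris, composable m k S f T g ->
         tri_witness m k c (liftAB c S f) (liftBG c T g) (liftAG R S (g \o f)) tris ->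
         forall i : int, 1 <= i <= m%:Z ->
         exists n : nat, local_mult m c tris i n /\
           wt R S f i + wt R T g i = wt R S (g \o f) i + n%:R)].

Proof.
move=> k0 km hc; split.
- move=> S f T g S' f' T' g' C1 C2 E1 E2 _.
  exact: (claim1 hc C1 C2 E1 E2).
- move=> S f T g C; exact: (claim2 hc C).
- move=> X Y Z sX sY sZ tc; exact: (claim3 hc sX sY sZ tc).
- exact: (claim4 k0 km hc).
Qed.
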